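(* For all positive integers $n,q,d_h,d_m$ with $q\ge2$ and $d_m\le n$, $$A_{MU}(n,q,d_h,d_m)\le\frac{M(n,q,d)}{\lfloor n/d_m\rfloor},\qquad d=\min\{d_h,2d_m\}.$$
   Context: $\Sigma_q=\{0,\dots,q-1\}$, $d_H$ is Hamming distance, and for $\vec a\in\Sigma_q^n$, $\vec a_i^j=(a_i,\dots,a_j)$. A code $\mathcal C\subseteq\Sigma_q^n$ is a $(d_h,d_m)$-MU code if (1) any two distinct codewords are at Hamming distance at least $d_h$, and (2) for every two not necessarily distinct $\vec a,\vec b\in\mathcal C$ and every $i\in[1,n-1]$, $d_H(\vec a_1^i,\vec b_{n-i+1}^n)\ge\min\{i,d_m\}$. $A_{MU}(n,q,d_h,d_m)$ is the largest size of a $(d_h,d_m)$-MU code in $\Sigma_q^n$, and $M(n,q,d)$ is the largest size of a code in $\Sigma_q^n$ with minimum Hamming distance $d$. *)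

(* Defs.v *)
From HB Require Import structures.
From mathcomp Require Import all_boot all_order all_algebra.
Set Implicit Arguments. Unset Strict Implicit. Unset Printing Implicit Defensive.

Definition word (n q : nat) := (n.-tuple 'I_q)%type.

(* Hamming distance between two sequences (used only on equal lengths). *)
Definition dH (T : eqType) (s t : seq T) : nat :=
  count (fun p : T * T => p.1 != p.2) (zip s t).

Definition is_dist_code (n q d : nat) (C : {set word n q}) : bool :=
  [forall a in C, forall b in C, (a != b) ==> (d <= dH a b)].

(* (d_h, d_m)-MU code: condition (2) for i in [1, n-1], with a_1^i = take i a
   and b_{n-i+1}^n = drop (n - i) b. *)
Definition is_MU_code (n q dh dm : nat) (C : {set word n q}) : bool :=
  is_dist_code dh C &&
  [forall a in C, forall b in C, forall i : 'I_n,
     (0 < i) ==> (minn i dm <= dH (take i a) (drop (n - i) b))].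

Definition A_MU (n q dh dm : nat) : nat :=
  \max_(C : {set word n q} | is_MU_code dh dm C) #|C|.

Definition M_code (n q d : nat) : nat :=
  \max_(C : {set word n q} | is_dist_code d C) #|C|.

(* Main.v *)
Require Import Defs.
From HB Require Import structures.
From mathcomp Require Import all_boot all_order all_algebra zify.
Import Order.TTheory GRing.Theory Num.Theory.
Set Implicit Arguments. Unset Strict Implicit.

Lemma dH_cat (T : eqType) (x1 x2 y1 y2 : seq T) : size x1 = size y1 ->
  dH (x1 ++ x2) (y1 ++ y2) = dH x1 y1 + dH x2 y2.
Proof. by move=> h; rewrite /dH zip_cat // count_cat. Qed.

Lemma dH_sym (T : eqType) (x y : seq T) : dH x y = dH y x.
Proof.
elim: x y => [|a x IH] [|b y] //=; rewrite /dH /= in IH *.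
by rewrite IH eq_sym.
Qed.

Lemma dH_refl (T : eqType) (x : seq T) : dH x x = 0.
Proof. by elim: x => //= a x; rewrite /dH /= eqxx. Qed.

Lemma rot_split (T : eqType) n s t (a b : seq T) :
  size a = n -> size b = n -> s < t -> t <= n ->
  dH (rot s a) (rot t b) =
  dH (take (n - (t - s)) a) (drop (t - s) b) + dH (take (t - s) b) (drop (n - (t - s)) a).
Proof.
move=> sa sb st tn.
move Hu: (t - s) => u.
have tE : t = s + u by lia.
have X : drop s a = take (n - t) (drop s a) ++ drop (n - t) (drop s a) by rewrite cat_take_drop.
have Y : take t b = take u b ++ take s (drop u b).
  by rewrite tE addnC takeD.
rewrite /rot X Y -catA.
rewrite dH_cat; last by rewrite !size_take !size_drop sa sb; case: ltnP; lia.
rewrite dH_cat; last by rewrite size_drop size_take !size_drop sa sb; case: ltnP; lia.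
rewrite drop_drop.
have -> : n - t + s = n - u by lia.
rewrite [dH _ (take u b)]dH_sym.
have EA : take (n - u) a = take s a ++ take (n - t) (drop s a).
  by rewrite -takeD; congr take; lia.
have EB : drop u b = take s (drop u b) ++ drop t b.
  by rewrite -{1}(cat_take_drop s (drop u b)) drop_drop tE addnC.
rewrite EA [in RHS]EB dH_cat; last by rewrite size_take size_take size_drop sa sb; case: ltnP => ?; case: ltnP => ?; lia.
rewrite addnA; lia.
Qed.

Lemma dH_rot (T : eqType) s (a b : seq T) : size a = size b ->
  dH (rot s a) (rot s b) = dH a b.
Proof.
move=> h; rewrite /rot dH_cat ?size_drop ?h // addnC -dH_cat ?size_take ?h //.
by rewrite !cat_take_drop.
Qed.

Lemma mu_prop n q dh dm (C : {set word n q}) : is_MU_code dh dm C ->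
  forall a b, a \in C -> b \in C -> forall i, 0 < i -> i < n ->
  minn i dm <= dH (take i a) (drop (n - i) b).
Proof.
case/andP=> _ /forall_inP H a b aC bC i i0 il.
move/forall_inP: (H a aC) => /(_ b bC) /forallP /(_ (Ordinal il)) /implyP.
by apply.
Qed.

Lemma mu_dist n q dh dm (C : {set word n q}) : is_MU_code dh dm C ->
  forall a b, a \in C -> b \in C -> forall i, 0 < i -> i < n ->
  minn i dm <= dH (take i a) (drop (n - i) b).
Proof. exact: mu_prop. Qed.

Lemma far n q dh dm (C : {set word n q}) : is_MU_code dh dm C ->
  forall (a b : word n q), a \in C -> b \in C -> forall s t, s + dm <= t -> t + dm <= n -> 0 < dm ->
  2 * dm <= dH (rot s a) (rot t b).
Proof.
move=> hC a b aC bC s t st tn dm0.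
rewrite (@rot_split _ n) ?size_tuple //; try lia.
have h1 : minn (n - (t - s)) dm <= dH (take (n - (t - s)) a) (drop (n - (n - (t - s))) b).
  by apply: (mu_prop hC aC bC); lia.
have h2 : minn (t - s) dm <= dH (take (t - s) b) (drop (n - (t - s)) a).
  by apply: (mu_prop hC bC aC); lia.
have E : n - (n - (t - s)) = t - s by lia.
rewrite E in h1.
have m1 : minn (n - (t - s)) dm = dm by apply/minn_idPr; lia.
have m2 : minn (t - s) dm = dm by apply/minn_idPr; lia.
rewrite m1 in h1; rewrite m2 in h2; rewrite mul2n -addnn; exact: leq_add.
Qed.

Lemma dmin n q dh dm (C : {set word n q}) : is_MU_code dh dm C -> 0 < dm ->
  forall (a b : word n q), a \in C -> b \in C -> forall i j, i * dm + dm <= n -> j * dm + dm <= n ->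
  (a, i) != (b, j) -> minn dh (2 * dm) <= dH (rot (i * dm) a) (rot (j * dm) b).
Proof.
move=> hC dm0 a b aC bC i j hi hj ne.
case: (ltngtP i j) => hij.
- apply: leq_trans (geq_minr _ _) _; apply: (far hC aC bC) => //.
  by rewrite -mulSnr leq_pmul2r.
- rewrite dH_sym; apply: leq_trans (geq_minr _ _) _; apply: (far hC bC aC) => //.
  by rewrite -mulSnr leq_pmul2r.
- subst j; rewrite dH_rot ?size_tuple //.
  apply: leq_trans (geq_minl _ _) _.
  have ab : a != b by apply: contraNneq ne => ->.
  by case/andP: hC => /forall_inP /(_ a aC) /forall_inP /(_ b bC) /implyP /(_ ab).
Qed.

Lemma count_bound n q dh dm (C : {set word n q}) : is_MU_code dh dm C -> 0 < dm -> 0 < dh ->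
  #|C| * (n %/ dm) <= M_code n q (minn dh (2 * dm)).
Proof.
move=> hC dm0 dh0.
set k := n %/ dm.
have hk : forall i : 'I_k, i * dm + dm <= n.
  move=> i; apply: leq_trans (leq_trunc_div n dm).
  by rewrite -mulSnr leq_pmul2r // ltn_ord.
pose f := fun p : word n q * 'I_k => rot_tuple (p.2 * dm) p.1.
have key : forall x y, x \in setX C [set: 'I_k] -> y \in setX C [set: 'I_k] -> x != y ->
    minn dh (2 * dm) <= dH (f x) (f y).
  move=> [a i] [b j]; rewrite !inE /= !andbT => aC bC ne.
  apply: (dmin hC dm0 aC bC (hk i) (hk j)).
  by apply: contra ne => /eqP [-> /val_inj ->].
have finj : {in setX C [set: 'I_k] &, injective f}.
  move=> x y hx hy fxy; apply/eqP; apply/negPn/negP => ne.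
  have := key x y hx hy ne; rewrite fxy dH_refl.
  have : 0 < minn dh (2 * dm) by rewrite leq_min dh0 muln_gt0 dm0.
  by case: (minn dh (2 * dm)).
rewrite -(card_ord k) -cardsT -cardsX -(card_in_imset finj).
rewrite /M_code; apply: (@leq_bigmax_cond _ (fun D : {set word n q} => is_dist_code (minn dh (2 * dm)) D) (fun D : {set word n q} => #|D|)).
rewrite /is_dist_code.
apply/forall_inP => x /imsetP [x' hx' ->]; apply/forall_inP => y /imsetP [y' hy' ->].
apply/implyP => ne; apply: key => //.
by apply: contra ne => /eqP ->.
Qed.

Theorem theorem3 (n q dh dm : nat) :
  0 < n -> 0 < q -> 0 < dh -> 0 < dm -> 2 <= q -> dm <= n ->
  ((A_MU n q dh dm)%:R <=
     (M_code n q (minn dh (2 * dm)))%:R / (n %/ dm)%:R :> rat)%R.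
Proof.
move=> n0 q0 dh0 dm0 q2 dmn.
have k0 : 0 < n %/ dm by rewrite divn_gt0.
have hA : A_MU n q dh dm <= M_code n q (minn dh (2 * dm)) %/ (n %/ dm).
  apply/bigmax_leqP => C hC.
  by rewrite leq_divRL //; apply: count_bound.
rewrite ler_pdivlMr ?ltr0n // -natrM ler_nat.
apply: leq_trans (leq_trunc_div _ (n %/ dm)).
by rewrite leq_mul2r hA orbT.
Qed.
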